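(* Let $S$ be an entropy function for a finite set $X$, let $X'\subset X$, and let $S'$ be the restriction of $S$ to subsets of $X'$. Then $F_{S'}$ equals the image of $F_S$ under the coordinate projection $\mathbb R^X\to\mathbb R^{X'}$.
   Context: An entropy function for a finite set $X$ is a function $S:2^X\to[0,\infty)$ with $S(\emptyset)=0$, $S(A)+S(B)\ge S(A\cap B)+S(A\cup B)$ and $S(A)+S(B)\ge S(A\setminus B)+S(B\setminus A)$ for all $A,B\subseteq X$. An entanglement distribution function (EDF) for $S$ is a function $f:X\to\mathbb R$ (a vector in $\mathbb R^X$) with $\big|\sum_{x\in A}f(x)\big|\le S(A)$ for all $A\subseteq X$; $F_S\subseteq\mathbb R^X$ denotes the set of all EDFs for $S$ (the entropohedron). *)

(* Defs.v *)
From mathcomp Require Import all_boot all_order all_algebra.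
From mathcomp Require Import reals.
Set Implicit Arguments. Unset Strict Implicit. Unset Printing Implicit Defensive.
Import Order.TTheory GRing.Theory Num.Theory.
Local Open Scope ring_scope.

Definition entropy_function (R : realType) (T : finType) (S : {set T} -> R) : Prop :=
  S set0 = 0 /\
  (forall A, 0 <= S A) /\
  (forall A B, S (A :&: B) + S (A :|: B) <= S A + S B) /\
  (forall A B, S (A :\: B) + S (B :\: A) <= S A + S B).

Definition is_EDF (R : realType) (T : finType) (S : {set T} -> R) (f : T -> R) : Prop :=
  forall A : {set T}, `|\sum_(x in A) f x| <= S A.

Definition subT (T : finType) (Y : {set T}) : finType := {x : T | x \in Y}.

Definition restrict (R : realType) (T : finType) (Y : {set T}) (S : {set T} -> R)
  : {set subT Y} -> R := fun B => S [set val x | x in B].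

(* Main.v *)
Require Import Defs.
From mathcomp Require Import all_boot all_order all_algebra.
From mathcomp Require Import reals lra.
Import Order.TTheory GRing.Theory Num.Theory.
Local Open Scope ring_scope.

Section Ext.
Variables (R : realType) (X : finType) (S : {set X} -> R).
Hypothesis HS : entropy_function S.

Lemma diff_sum (g : X -> R) (A B : {set X}) :
  \sum_(z in B) g z - \sum_(z in A) g z =
  \sum_(z in B :\: A) g z - \sum_(z in A :\: B) g z.
Proof.
rewrite (big_setID (A:=B) A) (big_setID (A:=A) B) setIC /=.
lra.
Qed.

Lemma ext_step (Y : {set X}) (x : X) (g : X -> R) :
  x \notin Y ->
  (forall A : {set X}, A \subset Y -> `|\sum_(z in A) g z| <= S A) ->
  exists t : R, forall A : {set X}, A \subset Y ->
    - S (x |: A) <= t + \sum_(z in A) g z <= S (x |: A).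
Proof.
move=> xY Hg.
case: HS => _ [_ [_ Hwm]].
pose F := fun A : {set X} => - S (x |: A) - \sum_(z in A) g z.
have P0 : (set0 : {set X}) \subset Y by rewrite sub0set.
exists (F (Order.arg_max set0 (fun A : {set X} => A \subset Y) F)).
case: arg_maxP => // A0 A0Y Hmax A AY.
have key : \sum_(z in A) g z - \sum_(z in A0) g z <= S (x |: A) + S (x |: A0).
  rewrite diff_sum.
  have xA : x \notin A by apply: contra xY => /(subsetP AY).
  have xA0 : x \notin A0 by apply: contra xY => /(subsetP A0Y).
  have E1 : (x |: A) :\: (x |: A0) = A :\: A0.
    apply/setP => z; rewrite !inE; case: (eqVneq z x) => [->|] //=.
    by rewrite (negbTE xA) andbF.
  have E2 : (x |: A0) :\: (x |: A) = A0 :\: A.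
    apply/setP => z; rewrite !inE; case: (eqVneq z x) => [->|] //=.
    by rewrite (negbTE xA0) andbF.
  have := Hwm (x |: A) (x |: A0); rewrite E1 E2 => H.
  apply: le_trans H; apply: lerD.
    by have := Hg (A :\: A0) (subset_trans (subsetDl _ _) AY); rewrite ler_norml => /andP[].
  have := Hg (A0 :\: A) (subset_trans (subsetDl _ _) A0Y); rewrite ler_norml => /andP[H1 _].
  by rewrite lerNl.
have := Hmax A AY; rewrite /F => HA.
apply/andP; split.
  by rewrite -lerBlDr.
by rewrite -lerBrDr; move: key; rewrite /F; lra.
Qed.

Lemma ext_all (n : nat) : forall (Y : {set X}) (g : X -> R),
  #|~: Y| = n ->
  (forall A : {set X}, A \subset Y -> `|\sum_(z in A) g z| <= S A) ->
  exists f : X -> R, is_EDF S f /\ forall y, y \in Y -> f y = g y.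
Proof.
elim: n => [|n IH] Y g Hc Hg.
  have YT : Y = setT.
    apply/setP => z; rewrite inE; apply/negPn; apply/negP => zY.
    have : z \in ~: Y by rewrite inE.
    by rewrite (card0_eq Hc).
  exists g; split => // A; apply: Hg; by rewrite YT subsetT.
have : ~: Y != set0 by rewrite -card_gt0 Hc.
case/set0Pn => x xY.
rewrite inE in xY.
have [t Ht] := @ext_step Y x g xY Hg.
pose g' := fun z => if z == x then t else g z.
have Hc' : #|~: (x |: Y)| = n.
  rewrite (cardsD1 x) !inE xY in Hc.
  have -> : ~: (x |: Y) = ~: Y :\ x by apply/setP => z; rewrite !inE negb_or.
  by case: Hc.
have Hg' : forall A : {set X}, A \subset x |: Y -> `|\sum_(z in A) g' z| <= S A.
  move=> A AY.
  have eqg : forall B : {set X}, x \notin B -> \sum_(z in B) g' z = \sum_(z in B) g z.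
    move=> B xB; apply: eq_bigr => z zB; rewrite /g'.
    by case: eqVneq => // Ez; by move: xB; rewrite -Ez zB.
  have AxY : A :\ x \subset Y.
    apply/subsetP => z; rewrite !inE => /andP[zx zA].
    by have := subsetP AY z zA; rewrite !inE (negbTE zx).
  case: (boolP (x \in A)) => xA.
    rewrite (big_setD1 _ xA) eqg ?setD11 // /g' eqxx.
    have := Ht _ AxY; rewrite setD1K // => H.
    by rewrite ler_norml; move/andP: H => [-> ->].
  rewrite eqg //; apply: Hg.
  apply/subsetP => z zA; apply: (subsetP AxY); rewrite !inE zA andbT.
  by apply: contraNneq xA => <-.
have [f [Hf Hfg]] := IH _ _ Hc' Hg'.
exists f; split => // y yY.
rewrite Hfg ?inE ?yY ?orbT // /g'.
by case: eqVneq => // Ey; move: xY; rewrite -Ey yY.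
Qed.

End Ext.

Theorem corollary22 (R : realType) (X : finType) (Y : {set X}) (S : {set X} -> R) :
  entropy_function S ->
  forall g : subT Y -> R,
    is_EDF (restrict S) g <->
    exists f : X -> R, is_EDF S f /\ forall y : subT Y, g y = f (val y).
Proof.
move=> HS g; split.
  move=> Hg.
  pose g0 := fun x : X => if insub x is Some y then g y else 0.
  have [|f [Hf Hfg]] := @ext_all R X S HS _ Y g0 erefl.
    move=> A AY.
    have := Hg [set y : subT Y | val y \in A].
    rewrite /restrict.
    have EA : [set val x | x in [set y : subT Y | val y \in A]] = A.
      apply/setP => z; apply/imsetP/idP => [[y]|zA].
        by rewrite inE => yA ->.
      have zY := subsetP AY z zA.
      by exists (Sub z zY : subT Y); rewrite ?inE.
    rewrite EA.
    suff -> : \sum_(z in A) g0 z = \sum_(i in [set y : subT Y | val y \in A]) g i by [].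
    rewrite -[in LHS]EA big_imset /=; last exact: in2W val_inj.
    by apply: eq_bigr => y _; rewrite /g0 valK.
  exists f; split => // y.
  rewrite Hfg ?(valP y) // /g0 /= valK //.
move=> [f [Hf Hfg]] B.
rewrite /restrict.
have := Hf [set val x | x in B].
rewrite big_imset /=; last exact: in2W val_inj.
move=> H; under eq_bigr => y _ do rewrite Hfg.
exact: H.
Qed.
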